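(* Let $\alpha,a,b\in\mathbb{C}$ be such that none of $\alpha+a,\alpha-a,\alpha+b,\alpha-b$ belongs to $\{0,-1,-2,\ldots\}$. Then \[ \sum_{k=0}^{\infty}\frac{k+\alpha}{((k+\alpha)^2-a^2)((k+\alpha)^2-b^2)} =\frac12\sum_{n=1}^{\infty}\frac{(-1)^{n-1}(1\pm a\pm b)_{n-1}(\alpha\pm a)_{n-1}(\alpha\pm b)_{n-1}}{n\binom{2n}{n}(\alpha\pm a)_{2n}(\alpha\pm b)_{2n}}\,q(n), \] where \[ q(n)=2(2n-1)(3n+2\alpha-3)((2n+\alpha-1)^2-a^2)((2n+\alpha-1)^2-b^2)+((n+\alpha-1)^2-a^2)((n+\alpha-1)^2-b^2)\bigl(13n^2-10n(1-\alpha)+2(1-\alpha)^2-a^2-b^2\bigr). \]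
   Context: $(x)_n=x(x+1)\cdots(x+n-1)$, $(x)_0=1$. The notation $(u\pm v\pm w)_m$ denotes $(u+v+w)_m(u+v-w)_m(u-v+w)_m(u-v-w)_m$, and $(u\pm v)_m=(u+v)_m(u-v)_m$. *)

(* Defs.v *)
From Stdlib Require Import Reals.
From Stdlib Require Binomial.
From Coquelicot Require Import Coquelicot.
Open Scope C_scope.

Fixpoint poch (x : C) (n : nat) : C :=
  match n with
  | O => 1
  | S m => poch x m * (x + RtoC (INR m))
  end.

Definition poch_pm (u v : C) (m : nat) : C := poch (u + v) m * poch (u - v) m.

Definition poch_pmpm (u v w : C) (m : nat) : C :=
  poch (u + v + w) m * poch (u + v - w) m * poch (u - v + w) m * poch (u - v - w) m.

Definition nonpos_int (x : C) : Prop := exists m : nat, x = RtoC (- INR m).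

Definition lhs_term (alpha a b : C) (k : nat) : C :=
  (RtoC (INR k) + alpha) /
  (((RtoC (INR k) + alpha) * (RtoC (INR k) + alpha) - a * a) *
   ((RtoC (INR k) + alpha) * (RtoC (INR k) + alpha) - b * b)).

Definition qn (alpha a b : C) (n : nat) : C :=
  let N := RtoC (INR n) in
  2 * (2 * N - 1) * (3 * N + 2 * alpha - 3)
    * ((2 * N + alpha - 1) * (2 * N + alpha - 1) - a * a)
    * ((2 * N + alpha - 1) * (2 * N + alpha - 1) - b * b)
  + ((N + alpha - 1) * (N + alpha - 1) - a * a)
    * ((N + alpha - 1) * (N + alpha - 1) - b * b)
    * (13 * N * N - 10 * N * (1 - alpha) + 2 * (1 - alpha) * (1 - alpha) - a * a - b * b).

(* summand of the right-hand series at index n >= 1 (without the factor 1/2) *)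
Definition rhs_term (alpha a b : C) (n : nat) : C :=
  (RtoC ((-1) ^ (n - 1)) * poch_pmpm 1 a b (n - 1)
     * poch_pm alpha a (n - 1) * poch_pm alpha b (n - 1))
  / (RtoC (INR n) * RtoC (Binomial.C (2 * n) n)
     * poch_pm alpha a (2 * n) * poch_pm alpha b (2 * n))
  * qn alpha a b n.

(* Main.v *)
Require Import Defs.
From Stdlib Require Import Reals Lia Lra Factorial.
From Coquelicot Require Import Coquelicot.
Open Scope C_scope.

Lemma INRC_S (n : nat) : RtoC (INR (S n)) = RtoC (INR n) + 1.
Proof. rewrite S_INR, RtoC_plus. reflexivity. Qed.
Lemma INRC_plus (n m : nat) : RtoC (INR (n + m)) = RtoC (INR n) + RtoC (INR m).
Proof. rewrite plus_INR, RtoC_plus. reflexivity. Qed.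
Lemma INRC_0 : RtoC (INR 0) = 0.
Proof. reflexivity. Qed.

Definition Qf (a b y : C) : C := (y*y - a*a)*(y*y - b*b).
Fixpoint Wn (a b y : C) (m : nat) : C :=
  match m with O => 1 | S m' => Wn a b y m' * Qf a b (y + RtoC (INR m')) end.

Lemma Wn_Sl a b y m : Wn a b y (S m) = Qf a b y * Wn a b (y+1) m.
Proof.
  induction m.
  - simpl. rewrite Cplus_0_r. ring.
  - change (Wn a b y (S (S m))) with (Wn a b y (S m) * Qf a b (y + RtoC (INR (S m)))).
    rewrite IHm. change (Wn a b (y+1) (S m)) with (Wn a b (y+1) m * Qf a b (y+1+RtoC (INR m))). rewrite INRC_S. replace (y + (RtoC (INR m) + 1)) with (y + 1 + RtoC (INR m)) by ring. ring.
Qed.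

Lemma binom_S (n : nat) :
  (Binomial.C (2 * S n) (S n) * ((INR n + 1) * (INR n + 1)) =
  Binomial.C (2 * n) n * ((2 * INR n + 1) * (2 * INR n + 2)))%R.
Proof.
  unfold Binomial.C.
  replace (2 * S n - S n)%nat with (S n) by lia.
  replace (2 * n - n)%nat with n by lia.
  replace (2 * S n)%nat with (S (S (2 * n))) by lia.
  change (fact (S (S (2*n)))) with (S (S (2*n)) * fact (S (2*n)))%nat.
  change (fact (S (2*n))) with (S (2*n) * fact (2*n))%nat.
  change (fact (S n)) with (S n * fact n)%nat.
  rewrite !mult_INR, !S_INR, mult_INR.
  pose proof (INR_fact_neq_0 n). pose proof (INR_fact_neq_0 (2*n)).
  assert (INR n + 1 <> 0)%R by (pose proof (pos_INR n); lra).
  simpl (INR 2). field. auto.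
Qed.

Definition s (a b : C) (n : nat) : C :=
  RtoC ((-1)^n) * poch_pmpm 1 a b n / RtoC (Binomial.C (2*n) n).

Lemma binom_pos n : (0 < Binomial.C (2*n) n)%R.
Proof.
  unfold Binomial.C. apply Rdiv_lt_0_compat. apply lt_0_INR, lt_O_fact.
  apply Rmult_lt_0_compat; apply lt_0_INR, lt_O_fact.
Qed.

Definition Pf (a b m : C) : C := (m+a+b)*(m+a-b)*(m-a+b)*(m-a-b).

Lemma s_S a b n : s a b (S n) =
  s a b n * (- (RtoC (INR n) + 1) * Pf a b (RtoC (INR n) + 1) / (2 * (2 * RtoC (INR n) + 1))).
Proof.
  unfold s, poch_pmpm. simpl poch.
  pose proof (binom_S n) as HB.
  pose proof (binom_pos n). pose proof (binom_pos (S n)).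
  assert (RtoC (Binomial.C (2*n) n) <> 0).
  { intro H'. apply RtoC_inj in H'. lra. }
  assert (Hn1: RtoC (INR n) + 1 <> 0).
  { intro H'. rewrite <- INRC_S in H'. apply RtoC_inj in H'. pose proof (lt_0_INR (S n) ltac:(lia)). lra. }
  assert (2 * RtoC (INR n) + 1 <> 0).
  { intro H'. replace (2 * RtoC (INR n) + 1) with (RtoC (2 * INR n + 1)) in H'
      by (rewrite RtoC_plus, RtoC_mult; reflexivity).
    apply RtoC_inj in H'. pose proof (pos_INR n). lra. }
  assert (2 * RtoC (INR n) + 2 <> 0).
  { intro H'. replace (2 * RtoC (INR n) + 2) with (RtoC (2 * INR n + 2)) in H'
      by (rewrite RtoC_plus, RtoC_mult; reflexivity).
    apply RtoC_inj in H'. pose proof (pos_INR n). lra. }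
  assert (HC' : RtoC (Binomial.C (2 * S n) (S n)) * ((RtoC (INR n) + 1) * (RtoC (INR n) + 1)) =
     RtoC (Binomial.C (2 * n) n) * ((2 * RtoC (INR n) + 1) * (2 * RtoC (INR n) + 2))).
  { apply (f_equal RtoC) in HB. rewrite !RtoC_mult, !RtoC_plus, !RtoC_mult in HB. exact HB. }
  assert (HC : RtoC (Binomial.C (2 * S n) (S n)) =
     RtoC (Binomial.C (2 * n) n) * ((2 * RtoC (INR n) + 1) * (2 * RtoC (INR n) + 2))
      / ((RtoC (INR n) + 1) * (RtoC (INR n) + 1))).
  { rewrite <- HC'. field. auto. }
  rewrite HC. unfold Pf.
  rewrite !RtoC_pow. simpl Cpow.
  field. repeat split; auto.
Qed.

Definition Fm (al a b : C) (n k : nat) : C :=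
  s a b n * (al + RtoC (INR k) + 3 * RtoC (INR n) / 2) / Wn a b (al + RtoC (INR (k+n))) (S n).
Definition Gm (al a b : C) (n k : nat) : C :=
  s a b n / (4 * (2 * RtoC (INR n) + 1)) * qn (al + RtoC (INR k)) a b (S n)
   / Wn a b (al + RtoC (INR (k+n))) (S (S n)).

Definition good (al a b : C) := forall m : nat, Qf a b (al + RtoC (INR m)) <> 0.

Lemma Wn_nz al a b : good al a b -> forall m len, Wn a b (al + RtoC (INR m)) len <> 0.
Proof.
  intros H m len. induction len.
  - simpl. exact C1_nz.
  - cbn [Wn]. apply Cmult_neq_0; auto.
    replace (al + RtoC (INR m) + RtoC (INR len)) with (al + RtoC (INR (m+len))).
    apply H. rewrite INRC_plus. ring.
Qed.

Lemma nat_nz (n : nat) : 2 * RtoC (INR n) + 1 <> 0.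
Proof.
  intro H'. replace (2 * RtoC (INR n) + 1) with (RtoC (2 * INR n + 1)) in H'
      by (rewrite RtoC_plus, RtoC_mult; reflexivity).
  apply RtoC_inj in H'. pose proof (pos_INR n). lra.
Qed.

Lemma WZ al a b n k : good al a b ->
  Fm al a b (S n) k - Fm al a b n k = Gm al a b n (S k) - Gm al a b n k.
Proof.
  intros Hg.
  set (M := Wn a b (al + RtoC (INR (k + S n))) n).
  assert (HM : M <> 0) by apply Wn_nz, Hg.
  assert (W1 : Wn a b (al + RtoC (INR (k+S n))) (S (S n)) =
     M * Qf a b (al + RtoC (INR (k + S n + n))) * Qf a b (al + RtoC (INR (k + S n + S n)))).
  { cbn [Wn]. fold M. f_equal; [f_equal; f_equal | f_equal]; rewrite !INRC_plus; ring. }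
  assert (W2 : Wn a b (al + RtoC (INR (k+n))) (S n) = Qf a b (al + RtoC (INR (k+n))) * M).
  { rewrite Wn_Sl. unfold M. f_equal. f_equal. rewrite !INRC_plus, INRC_S. ring. }
  assert (W3 : Wn a b (al + RtoC (INR (S k+n))) (S (S n)) =
     M * Qf a b (al + RtoC (INR (k + S n + n))) * Qf a b (al + RtoC (INR (k + S n + S n)))).
  { rewrite <- W1. do 3 f_equal. f_equal. lia. }
  assert (W4 : Wn a b (al + RtoC (INR (k+n))) (S (S n)) =
     Qf a b (al + RtoC (INR (k+n))) * M * Qf a b (al + RtoC (INR (k + S n + n)))).
  { rewrite Wn_Sl. cbn [Wn]. unfold M. rewrite <- !Cmult_assoc. f_equal.
    replace (al + RtoC (INR (k + n)) + 1) with (al + RtoC (INR (k + S n))).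
    f_equal. f_equal. rewrite !INRC_plus; ring.
    rewrite !INRC_plus, INRC_S. ring. }
  unfold Fm, Gm. rewrite W1, W2, W3, W4. rewrite s_S.
  pose proof (Hg (k+n)%nat) as H0. pose proof (Hg (k + S n + n)%nat) as H2.
  pose proof (Hg (k + S n + S n)%nat) as H3.
  assert (Hs : RtoC (INR (S k + n)) = RtoC (INR (k + S n))) by (f_equal; f_equal; lia).
  set (Q0 := Qf a b (al + RtoC (INR (k + n)))) in *.
  set (Q2 := Qf a b (al + RtoC (INR (k + S n + n)))) in *.
  set (Q3 := Qf a b (al + RtoC (INR (k + S n + S n)))) in *.
  pose proof (nat_nz n).
  field_simplify_eq; [| repeat split; auto].
  unfold Q0, Q2, Q3, Qf, qn, Pf. rewrite !INRC_plus, !INRC_S. ring.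
Qed.

Fixpoint ps (f : nat -> C) (K : nat) : C :=
  match K with O => 0 | S K' => ps f K' + f K' end.

Lemma sum_ps f K : sum_n f K = ps f (S K).
Proof.
  induction K.
  - rewrite sum_O. simpl. symmetry. apply Cplus_0_l.
  - rewrite sum_Sn, IHK. reflexivity.
Qed.

Lemma tele al a b n K : good al a b ->
  ps (Fm al a b (S n)) K - ps (Fm al a b n) K = Gm al a b n K - Gm al a b n 0.
Proof.
  intros Hg. induction K.
  - simpl. ring.
  - simpl. transitivity ((ps (Fm al a b (S n)) K - ps (Fm al a b n) K) +
       (Fm al a b (S n) K - Fm al a b n K)). ring.
    rewrite IHK, (WZ al a b n K Hg). ring.
Qed.

Lemma main_id al a b N K : good al a b ->
  ps (Fm al a b 0) K = ps (Fm al a b N) K + ps (fun n => Gm al a b n 0) N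
     - ps (fun n => Gm al a b n K) N.
Proof.
  intros Hg. induction N.
  - simpl. ring.
  - simpl. rewrite IHN. pose proof (tele al a b N K Hg). 
    replace (ps (Fm al a b (S N)) K) with (ps (Fm al a b N) K + (Gm al a b N K - Gm al a b N 0)).
    ring. rewrite <- H. ring.
Qed.

Lemma s0 a b : s a b 0 = 1.
Proof. unfold s, Binomial.C, poch_pmpm. simpl.
  replace (1 / (1*1))%R with 1%R by field. field. Qed.

Lemma Fm0 al a b k : good al a b -> Fm al a b 0 k = lhs_term al a b k.
Proof.
  intros Hg. unfold Fm, lhs_term. rewrite s0. cbn [Wn]. rewrite Nat.add_0_r, INRC_0, Cplus_0_r.
  pose proof (Hg k). unfold Qf in *.
  replace (RtoC (INR k) + al) with (al + RtoC (INR k)) by ring.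
  field. split; intro E; apply H; rewrite E; ring.
Qed.

Lemma pm_W al a b n m :
  poch_pm al a (n+m) * poch_pm al b (n+m) =
  poch_pm al a n * poch_pm al b n * Wn a b (al + RtoC (INR n)) m.
Proof.
  induction m.
  - rewrite Nat.add_0_r. simpl. ring.
  - rewrite Nat.add_succ_r. unfold poch_pm in *. simpl poch. cbn [Wn].
    transitivity (poch (al + a) (n + m) * poch (al - a) (n + m) *
       (poch (al + b) (n + m) * poch (al - b) (n + m)) *
       ((al + a + RtoC (INR (n + m))) * (al - a + RtoC (INR (n + m))) *
        (al + b + RtoC (INR (n + m))) * (al - b + RtoC (INR (n + m))))). ring.
    rewrite IHm. unfold Qf. rewrite INRC_plus. ring.
Qed.

Lemma binomC_S n : RtoC (Binomial.C (2 * S n) (S n)) =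
     RtoC (Binomial.C (2 * n) n) * ((2 * RtoC (INR n) + 1) * (2 * RtoC (INR n) + 2))
      / ((RtoC (INR n) + 1) * (RtoC (INR n) + 1)).
Proof.
  pose proof (binom_S n) as HB.
  assert (Hn1: RtoC (INR n) + 1 <> 0).
  { intro H'. rewrite <- INRC_S in H'. apply RtoC_inj in H'. pose proof (lt_0_INR (S n) ltac:(lia)). lra. }
  assert (HC' : RtoC (Binomial.C (2 * S n) (S n)) * ((RtoC (INR n) + 1) * (RtoC (INR n) + 1)) =
     RtoC (Binomial.C (2 * n) n) * ((2 * RtoC (INR n) + 1) * (2 * RtoC (INR n) + 2))).
  { apply (f_equal RtoC) in HB. rewrite !RtoC_mult, !RtoC_plus, !RtoC_mult in HB. exact HB. }
  rewrite <- HC'. field. auto.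
Qed.

Lemma pm_nz al a b n : good al a b -> poch_pm al a n * poch_pm al b n <> 0.
Proof.
  intros Hg. pose proof (pm_W al a b 0 n) as H. simpl (0 + n)%nat in H.
  rewrite H. unfold poch_pm; simpl poch. rewrite !Cmult_1_l. apply Wn_nz, Hg.
Qed.

Lemma Gm0 al a b n : good al a b ->
  Gm al a b n 0 = rhs_term al a b (S n) / 2.
Proof.
  intros Hg. unfold Gm, rhs_term, s.
  replace (S n - 1)%nat with n by lia.
  rewrite binomC_S.
  replace (2 * S n)%nat with (n + S (S n))%nat by lia.
  rewrite INRC_0, Cplus_0_r. simpl (0 + n)%nat.

  set (X := RtoC (INR (S n)) * _).
  replace (X * poch_pm al a (n + S (S n)) * poch_pm al b (n + S (S n))) with
    (X * (poch_pm al a (n + S (S n)) * poch_pm al b (n + S (S n)))) by ring.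
  rewrite pm_W. unfold X. rewrite INRC_S.
  rewrite !RtoC_pow. 
  pose proof (binom_pos n).
  assert (RtoC (Binomial.C (2*n) n) <> 0).
  { intro H'. apply RtoC_inj in H'. lra. }
  assert (Hn1: RtoC (INR n) + 1 <> 0).
  { intro H'. rewrite <- INRC_S in H'. apply RtoC_inj in H'. pose proof (lt_0_INR (S n) ltac:(lia)). lra. }
  pose proof (nat_nz n).
  assert (2 * RtoC (INR n) + 2 <> 0).
  { intro H'. replace (2 * RtoC (INR n) + 2) with (RtoC (2 * INR n + 2)) in H'
      by (rewrite RtoC_plus, RtoC_mult; reflexivity).
    apply RtoC_inj in H'. pose proof (pos_INR n). lra. }
  pose proof (Wn_nz al a b Hg n (S (S n))).
  pose proof (pm_nz al a b n Hg) as Hp.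
  field. repeat split; try exact Hn1; try exact H1; try exact H2; try exact H3; try exact H0;
    intro E; apply Hp; rewrite E; ring.
Qed.

Lemma limC (u : nat -> C) l :
  (forall eps, (0 < eps)%R -> exists N, forall n, (N <= n)%nat -> (Cmod (u n - l) < eps)%R) ->
  filterlim u eventually (locally l).
Proof.
  intros H. apply (proj2 (@filterlim_locally_ball_norm C_AbsRing nat C_NormedModule eventually _ u l)). intros eps.
  destruct (H eps (cond_pos eps)) as [N HN]. exists N. intros n Hn. apply HN, Hn.
Qed.

Lemma limC_inv (u : nat -> C) l : filterlim u eventually (locally l) ->
  (forall eps, (0 < eps)%R -> exists N, forall n, (N <= n)%nat -> (Cmod (u n - l) < eps)%R).
Proof.
  intros H eps Heps.
  pose proof (proj1 (@filterlim_locally_ball_norm C_AbsRing nat C_NormedModule eventually _ u l) H (mkposreal eps Heps)) as H'.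
  destruct H' as [N HN]. exists N. intros n Hn. apply (HN n Hn).
Qed.

Lemma limR (u : nat -> R) l :
  (forall eps, (0 < eps)%R -> exists N, forall n, (N <= n)%nat -> (Rabs (u n - l) < eps)%R) ->
  filterlim u eventually (locally l).
Proof.
  intros H. apply (proj2 (@filterlim_locally_ball_norm R_AbsRing nat R_NormedModule eventually _ u l)). intros eps.
  destruct (H eps (cond_pos eps)) as [N HN]. exists N. intros n Hn. apply HN, Hn.
Qed.

Lemma Cmod_small_eq (x y : C) : (forall eps, (0 < eps)%R -> (Cmod (x - y) < eps)%R) -> x = y.
Proof.
  intros H. assert (Cmod (x - y) = 0%R).
  { destruct (Rle_lt_or_eq_dec 0 (Cmod (x-y)) (Cmod_ge_0 _)) as [h|h]; auto.
    specialize (H _ h). lra. }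
  apply Cmod_eq_0 in H0. apply Ceq_minus. exact H0.
Qed.

Lemma series_unique (f : nat -> C) l1 l2 : is_series f l1 -> is_series f l2 -> l1 = l2.
Proof.
  intros H1 H2. apply Cmod_small_eq. intros eps He.
  destruct (limC_inv _ _ H1 (eps/2) ltac:(lra)) as [N1 h1].
  destruct (limC_inv _ _ H2 (eps/2) ltac:(lra)) as [N2 h2].
  specialize (h1 (N1+N2)%nat ltac:(lia)). specialize (h2 (N1+N2)%nat ltac:(lia)).
  set (z := (sum_n f (N1+N2) : C)).
  assert (a1 : (Cmod (z - l1) < eps/2)%R) by exact h1.
  assert (a2 : (Cmod (z - l2) < eps/2)%R) by exact h2.
  replace (l1 - l2) with ((z - l2) + - (z - l1)) by ring.
  eapply Rle_lt_trans. apply Cmod_triangle. rewrite Cmod_opp. lra.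
Qed.

Definition bq (k : nat) : R := / ((INR k + 1) * (INR k + 2)).

Lemma bq_sum K : sum_n bq K = (1 - / (INR K + 2))%R.
Proof.
  induction K.
  - rewrite sum_O. unfold bq. simpl. match goal with |- ?x = ?y => change (@eq R x y) end. field.
  - rewrite sum_Sn, IHK. unfold bq. rewrite S_INR. change plus with Rplus.
    pose proof (pos_INR K). match goal with |- ?x = ?y => change (@eq R x y) end. field. lra.
Qed.

Lemma bq_series : is_series bq 1%R.
Proof.
  apply limR. intros eps He.
  destruct (INR_archimed eps (/eps) He) as [N HN].
  exists N. intros n Hn. rewrite bq_sum.
  pose proof (pos_INR n). apply le_INR in Hn.
  replace (1 - / (INR n + 2) - 1)%R with (- / (INR n + 2))%R by ring.
  rewrite Rabs_Ropp, Rabs_pos_eq.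
  2:{ left. apply Rinv_0_lt_compat. lra. }
  assert (INR N * eps <= (INR n + 2) * eps)%R by (apply Rmult_le_compat_r; lra).
  apply (Rmult_lt_reg_r (INR n + 2)). lra. rewrite Rinv_l by lra.
  assert (/ eps * eps = 1)%R by (field; lra). nra.
Qed.

Lemma bq_le K : (sum_n bq K <= 1)%R.
Proof. rewrite bq_sum. pose proof (pos_INR K). assert (0 < / (INR K + 2))%R by (apply Rinv_0_lt_compat; lra). lra. Qed.

Definition Cst (al a b : C) : R := (Cmod al + Cmod a + Cmod b)%R.


Lemma Cmod_lb (u : C) (c r : R) : (Cmod u <= c)%R -> (r - c <= Cmod (u + RtoC r))%R.
Proof.
  intros H. pose proof (Cmod_triangle (u + RtoC r) (- u)) as T.
  replace (u + RtoC r + - u) with (RtoC r) in T by ring.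
  rewrite Cmod_R, Cmod_opp in T. pose proof (Rle_abs r). lra.
Qed.

Lemma Cmod_ub (u : C) (c r : R) : (Cmod u <= c)%R -> (0 <= r)%R -> (Cmod (u + RtoC r) <= r + c)%R.
Proof.
  intros H Hr. eapply Rle_trans. apply Cmod_triangle. rewrite Cmod_R, Rabs_pos_eq; lra.
Qed.

Lemma Qf_fact a b (al z : C) : Qf a b (al + z) = (al+a+z)*(al-a+z)*(al+b+z)*(al-b+z).
Proof. unfold Qf. ring. Qed.

Lemma Cmod_sub (x y : C) : (Cmod (x - y) <= Cmod x + Cmod y)%R.
Proof. eapply Rle_trans. apply Cmod_triangle. rewrite Cmod_opp. lra. Qed.

Lemma us_bound al a b :
  (Cmod (al + a) <= Cst al a b /\ Cmod (al - a) <= Cst al a b /\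
   Cmod (al + b) <= Cst al a b /\ Cmod (al - b) <= Cst al a b /\
   Cmod al <= Cst al a b /\ 0 <= Cst al a b)%R.
Proof.
  unfold Cst. pose proof (Cmod_ge_0 al). pose proof (Cmod_ge_0 a). pose proof (Cmod_ge_0 b).
  pose proof (Cmod_triangle al a). pose proof (Cmod_sub al a).
  pose proof (Cmod_triangle al b). pose proof (Cmod_sub al b). lra.
Qed.

Lemma prod4_lb (x1 x2 x3 x4 m : R) : (0 <= m)%R -> (m <= x1)%R -> (m <= x2)%R -> (m <= x3)%R -> (m <= x4)%R ->
  (m^4 <= x1 * x2 * x3 * x4)%R.
Proof.
  intros. replace (m^4)%R with (m*m*m*m)%R by ring.
  assert (m*m <= x1*x2)%R by (apply Rmult_le_compat; lra).
  assert (0 <= m*m)%R by (apply Rmult_le_pos; lra).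
  assert (m*m*m <= x1*x2*x3)%R by (apply Rmult_le_compat; lra).
  assert (0 <= m*m*m)%R by (apply Rmult_le_pos; lra).
  apply Rmult_le_compat; lra.
Qed.

Lemma prod4_ub (x1 x2 x3 x4 m : R) : (0 <= x1)%R -> (0 <= x2)%R -> (0 <= x3)%R -> (0 <= x4)%R ->
  (x1 <= m)%R -> (x2 <= m)%R -> (x3 <= m)%R -> (x4 <= m)%R ->
  (x1 * x2 * x3 * x4 <= m^4)%R.
Proof.
  intros. replace (m^4)%R with (m*m*m*m)%R by ring.
  assert (x1*x2 <= m*m)%R by (apply Rmult_le_compat; lra).
  assert (0 <= x1*x2)%R by (apply Rmult_le_pos; lra).
  assert (x1*x2*x3 <= m*m*m)%R by (apply Rmult_le_compat; lra).
  assert (0 <= x1*x2*x3)%R by (apply Rmult_le_pos; lra).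
  apply Rmult_le_compat; lra.
Qed.

Lemma Qf_lb al a b (r : R) : (Cst al a b <= r)%R ->
  ((r - Cst al a b)^4 <= Cmod (Qf a b (al + RtoC r)))%R.
Proof.
  intros H. rewrite Qf_fact, !Cmod_mult.
  destruct (us_bound al a b) as (u1 & u2 & u3 & u4 & _).
  apply prod4_lb; try lra; apply Cmod_lb; auto.
Qed.

Lemma Qf_ub al a b (r : R) : (0 <= r)%R ->
  (Cmod (Qf a b (al + RtoC r)) <= (r + Cst al a b)^4)%R.
Proof.
  intros H. rewrite Qf_fact, !Cmod_mult.
  destruct (us_bound al a b) as (u1 & u2 & u3 & u4 & _).
  apply prod4_ub; try apply Cmod_ge_0; apply Cmod_ub; auto.
Qed.

Lemma Wn_ge1 a b y len : (forall j, (1 <= Cmod (Qf a b (y + RtoC (INR j))))%R) ->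
  (1 <= Cmod (Wn a b y len))%R.
Proof.
  intros H. induction len.
  - simpl. rewrite Cmod_1. lra.
  - cbn [Wn]. rewrite Cmod_mult. specialize (H len). nra.
Qed.

Lemma Rest_ge1 al a b (m len : nat) : (Cst al a b + 1 <= INR m)%R ->
  (1 <= Cmod (Wn a b (al + RtoC (INR m)) len))%R.
Proof.
  intros H. apply Wn_ge1. intros j.
  replace (al + RtoC (INR m) + RtoC (INR j)) with (al + RtoC (INR (m + j))) by (rewrite INRC_plus; ring).
  eapply Rle_trans. 2: apply Qf_lb.
  - rewrite plus_INR. apply pow_R1_Rle. pose proof (pos_INR j). lra.
  - rewrite plus_INR; pose proof (pos_INR j); lra.
Qed.


Lemma real_B2 (X Q R D t : R) : (0 <= t)%R -> (0 <= X)%R -> (X <= (t+1) * D)%R ->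
  ((t+2)^4 <= Q)%R -> (1 <= R)%R -> (X / (Q * R) <= D * / ((t + 1) * (t + 2)))%R.
Proof.
  intros Ht HX HXD HQ HR.
  assert (P4 : (0 < (t+2)^4)%R) by (apply pow_lt; lra).
  assert (h1 : (/ (Q * R) <= / ((t+2)^4))%R).
  { apply Rinv_le_contravar. exact P4. nra. }
  assert (h2 : ((t+1) * / ((t+2)^4) <= / ((t+1)*(t+2)))%R).
  { apply (Rmult_le_reg_r ((t+1)*(t+2)^4)). nra.
    replace ((t+1) * / ((t+2)^4) * ((t+1)*(t+2)^4))%R with ((t+1)*(t+1))%R by (field; lra).
    replace (/ ((t+1)*(t+2)) * ((t+1)*(t+2)^4))%R with ((t+2)^3)%R by (field; lra).
    simpl. nra. }
  assert (0 <= D)%R by nra.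
  unfold Rdiv. apply Rle_trans with (X * / ((t+2)^4))%R.
  apply Rmult_le_compat_l; auto.
  apply Rle_trans with ((t+1) * D * / ((t+2)^4))%R.
  apply Rmult_le_compat_r; auto. left; apply Rinv_0_lt_compat; auto.
  replace ((t+1) * D * / ((t+2)^4))%R with (D * ((t+1) * / ((t+2)^4)))%R by ring.
  apply Rmult_le_compat_l; auto.
Qed.

Lemma num_eq (al : C) (k N : nat) :
  al + RtoC (INR k) + 3 * RtoC (INR N) / 2 = al + RtoC (INR k + 3 * INR N / 2).
Proof.
  rewrite RtoC_plus, RtoC_div by lra. rewrite RtoC_mult. ring.
Qed.

Lemma B2' al a b N : good al a b -> (5 * Cst al a b + 2 <= INR N)%R ->
  exists Bc, forall k, (Cmod (Fm al a b N k) <= Bc * bq k)%R.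
Proof.
  intros Hg HN. destruct (us_bound al a b) as (u1 & u2 & u3 & u4 & u5 & u6).
  exists (Cmod (s a b N) * (Cmod al + 3 * INR N / 2 + 1))%R. intros k.
  unfold Fm. rewrite Wn_Sl.
  assert (HR : (1 <= Cmod (Wn a b (al + RtoC (INR (k + N)) + 1) N))%R).
  { replace (al + RtoC (INR (k + N)) + 1) with (al + RtoC (INR (S (k + N)))) by (rewrite INRC_S; ring).
    apply Rest_ge1. rewrite S_INR, plus_INR. pose proof (pos_INR k). lra. }
  assert (HQ : ((INR k + 2)^4 <= Cmod (Qf a b (al + RtoC (INR (k + N)))))%R).
  { eapply Rle_trans. 2: apply Qf_lb. apply pow_incr. rewrite plus_INR. pose proof (pos_INR k). lra.
    rewrite plus_INR. pose proof (pos_INR k). lra. }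
  assert (Hnz : Qf a b (al + RtoC (INR (k + N))) * Wn a b (al + RtoC (INR (k + N)) + 1) N <> 0).
  { rewrite <- Wn_Sl. apply Wn_nz, Hg. }
  unfold Rdiv. rewrite Cmod_div by exact Hnz. rewrite !Cmod_mult.
  rewrite num_eq.
  assert (HX : (Cmod (al + RtoC (INR k + 3 * INR N / 2)) <= INR k + 3 * INR N / 2 + Cmod al)%R).
  { apply Cmod_ub. lra. pose proof (pos_INR k). pose proof (pos_INR N). lra. }
  pose proof (Cmod_ge_0 (s a b N)) as Hs.
  unfold bq. rewrite Rmult_assoc. unfold Rdiv. rewrite Rmult_assoc.
  apply Rmult_le_compat_l. exact Hs.
  fold (Rdiv (Cmod (al + RtoC (INR k + 3 * INR N / 2)))
    (Cmod (Qf a b (al + RtoC (INR (k + N)))) * Cmod (Wn a b (al + RtoC (INR (k + N)) + 1) N))).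
  apply real_B2; auto. apply pos_INR. apply Cmod_ge_0.
  pose proof (pos_INR k). pose proof (pos_INR N). pose proof (Cmod_ge_0 al). nra.
Qed.


Lemma real_B1 (S A n1 n0 m q0 q2 q3 P Z : R) :
  (0 <= S)%R -> (0 <= A)%R -> (0 <= n1)%R -> (0 < m)%R -> (0 < q0)%R -> (0 < Z)%R ->
  (A <= P / 2)%R -> (n1 <= 2 * n0)%R -> (q0 <= q2)%R -> (Z <= q3)%R -> (P <= Z / 2)%R ->
  (S * A * n1 / (m * q2 * q3) <= / 2 * (S * n0 / (q0 * m)))%R.
Proof.
  intros HS HA Hn1 Hm Hq0 HZ HAP Hn HQ HZq HPZ.
  assert (h1 : (/ (m * q2 * q3) <= / (m * q0 * Z))%R).
  { apply Rinv_le_contravar. apply Rmult_lt_0_compat; [apply Rmult_lt_0_compat|]; lra.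
    apply Rmult_le_compat; [| | apply Rmult_le_compat_l|]; nra. }
  assert (h2 : (A * n1 <= Z * n0 / 2)%R).
  { assert (0 <= n0)%R by lra. assert (A * n1 <= P / 2 * (2 * n0))%R by (apply Rmult_le_compat; lra).
    nra. }
  unfold Rdiv. apply Rle_trans with (S * A * n1 * / (m * q0 * Z))%R.
  apply Rmult_le_compat_l. apply Rmult_le_pos; [apply Rmult_le_pos|]; lra. exact h1.
  apply Rle_trans with (S * (Z * n0 / 2) * / (m * q0 * Z))%R.
  rewrite Rmult_assoc with (r1 := S). apply Rmult_le_compat_r.
  left; apply Rinv_0_lt_compat; apply Rmult_lt_0_compat; [apply Rmult_lt_0_compat|]; lra.
  apply Rmult_le_compat_l; lra.
  right. field. repeat split; lra.
Qed.

Lemma prod4_mono (x1 x2 x3 x4 y1 y2 y3 y4 : R) :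
  (0 <= x1)%R -> (0 <= x2)%R -> (0 <= x3)%R -> (0 <= x4)%R ->
  (x1 <= y1)%R -> (x2 <= y2)%R -> (x3 <= y3)%R -> (x4 <= y4)%R ->
  (x1 * x2 * x3 * x4 <= y1 * y2 * y3 * y4)%R.
Proof.
  intros. apply Rmult_le_compat; try lra.
  apply Rmult_le_pos; [apply Rmult_le_pos|]; lra.
  apply Rmult_le_compat; try lra. apply Rmult_le_pos; lra.
  apply Rmult_le_compat; lra.
Qed.

Lemma Q_mono al a b (r0 r2 : R) : (0 <= r0)%R -> (r0 + 2 * Cst al a b <= r2)%R ->
  (Cmod (Qf a b (al + RtoC r0)) <= Cmod (Qf a b (al + RtoC r2)))%R.
Proof.
  intros H0 H2. rewrite !Qf_fact, !Cmod_mult.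
  destruct (us_bound al a b) as (u1 & u2 & u3 & u4 & _ & u6).
  apply prod4_mono; try apply Cmod_ge_0;
   (eapply Rle_trans; [apply Cmod_ub; eauto|]; eapply Rle_trans; [|apply Cmod_lb; eauto]; lra).
Qed.

Lemma Pf_ub a b (r : R) al : (0 <= r)%R ->
  (Cmod (Pf a b (RtoC r)) <= (r + Cst al a b)^4)%R.
Proof.
  intros Hr. unfold Pf.
  replace (RtoC r + a + b) with ((a + b) + RtoC r) by ring.
  replace (RtoC r + a - b) with ((a - b) + RtoC r) by ring.
  replace (RtoC r - a + b) with ((- a + b) + RtoC r) by ring.
  replace (RtoC r - a - b) with ((- a - b) + RtoC r) by ring.
  rewrite !Cmod_mult. unfold Cst.
  pose proof (Cmod_ge_0 al). pose proof (Cmod_ge_0 a). pose proof (Cmod_ge_0 b).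
  pose proof (Cmod_triangle a b). pose proof (Cmod_sub a b).
  pose proof (Cmod_triangle (-a) b). pose proof (Cmod_sub (-a) b). rewrite Cmod_opp in *.
  apply prod4_ub; try apply Cmod_ge_0; apply Cmod_ub; auto; lra.
Qed.

Lemma sig_eq a b N : - (RtoC (INR N) + 1) * Pf a b (RtoC (INR N) + 1) / (2 * (2 * RtoC (INR N) + 1))
  = - RtoC ((INR N + 1) / (2 * (2 * INR N + 1))) * Pf a b (RtoC (INR N + 1)).
Proof.
  pose proof (pos_INR N). pose proof (nat_nz N).
  rewrite RtoC_div by lra. repeat rewrite ?RtoC_plus, ?RtoC_mult.
  field. auto.
Qed.

Lemma B1' al a b N k : good al a b -> (5 * Cst al a b + 2 <= INR N)%R ->
  (Cmod (Fm al a b (S N) k) <= / 2 * Cmod (Fm al a b N k))%R.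
Proof.
  intros Hg HN. destruct (us_bound al a b) as (u1 & u2 & u3 & u4 & u5 & u6).
  pose proof (pos_INR k) as Hk. pose proof (pos_INR N) as HN0.
  set (M := Wn a b (al + RtoC (INR (k + S N))) N).
  assert (HM : M <> 0) by apply Wn_nz, Hg.
  assert (W1 : Wn a b (al + RtoC (INR (k+S N))) (S (S N)) =
     M * Qf a b (al + RtoC (INR (k + S N + N))) * Qf a b (al + RtoC (INR (k + S N + S N)))).
  { cbn [Wn]. fold M. f_equal; [f_equal; f_equal | f_equal]; rewrite !INRC_plus; ring. }
  assert (W2 : Wn a b (al + RtoC (INR (k+N))) (S N) = Qf a b (al + RtoC (INR (k+N))) * M).
  { rewrite Wn_Sl. unfold M. f_equal. f_equal. rewrite !INRC_plus, INRC_S. ring. }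
  unfold Fm. rewrite W1, W2, s_S.
  pose proof (Hg (k+N)%nat) as H0. pose proof (Hg (k + S N + N)%nat) as H2.
  pose proof (Hg (k + S N + S N)%nat) as H3.
  rewrite !num_eq.
  set (Q0 := Qf a b (al + RtoC (INR (k + N)))) in *.
  set (Q2 := Qf a b (al + RtoC (INR (k + S N + N)))) in *.
  set (Q3 := Qf a b (al + RtoC (INR (k + S N + S N)))) in *.
  set (sig := - (RtoC (INR N) + 1) * Pf a b (RtoC (INR N) + 1) / (2 * (2 * RtoC (INR N) + 1))).
  assert (Hsig : sig = - RtoC ((INR N + 1) / (2 * (2 * INR N + 1))) * Pf a b (RtoC (INR N + 1)))
    by apply sig_eq.
  unfold Rdiv.
  assert (D1 : M * Q2 * Q3 <> 0) by (apply Cmult_neq_0; [apply Cmult_neq_0|]; assumption).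
  assert (D2 : Q0 * M <> 0) by (apply Cmult_neq_0; assumption).
  rewrite !Cmod_div by assumption.
  rewrite !Cmod_mult. rewrite Hsig, Cmod_mult, Cmod_opp, Cmod_R, Rabs_pos_eq.
  2: { apply Rdiv_le_0_compat; lra. }
  set (P := ((INR N + 1 + Cst al a b)^4)%R).
  set (Z := ((2 * INR N + 2 - Cst al a b)^4)%R).
  apply real_B1 with (P := P) (Z := Z).
  - apply Cmod_ge_0.
  - apply Rmult_le_pos. apply Rdiv_le_0_compat; lra. apply Cmod_ge_0.
  - apply Cmod_ge_0.
  - apply Cmod_gt_0; auto.
  - apply Cmod_gt_0; auto.
  - unfold Z. apply pow_lt. lra.
  - assert (hc : ((INR N + 1) / (2 * (2 * INR N + 1)) <= / 2)%R).
    { apply (Rmult_le_reg_r (2 * (2 * INR N + 1))). lra.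
      unfold Rdiv. rewrite Rmult_assoc, Rinv_l by lra. lra. }
    pose proof (Pf_ub a b (INR N + 1) al ltac:(lra)) as hp. fold P in hp.
    pose proof (Cmod_ge_0 (Pf a b (RtoC (INR N + 1)))).
    apply Rle_trans with (/2 * P)%R. apply Rmult_le_compat; try lra.
    apply Rdiv_le_0_compat; lra. lra.
  - assert (E : al + RtoC (INR k + 3 * INR (S N) * / 2) = (al + RtoC (INR k + 3 * INR N * / 2)) + RtoC (3/2)).
    { rewrite S_INR. rewrite <- (Cplus_assoc al), <- RtoC_plus. f_equal. f_equal. field. }
    rewrite E. eapply Rle_trans. apply Cmod_triangle. rewrite Cmod_R, Rabs_pos_eq by lra.
    pose proof (Cmod_lb al (Cmod al) (INR k + 3 * INR N * / 2) ltac:(lra)).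
    lra.
  - unfold Q0, Q2. apply Q_mono. rewrite plus_INR; lra. rewrite !plus_INR, S_INR. lra.
  - unfold Q3, Z. eapply Rle_trans; [| apply Qf_lb].
    apply pow_incr. rewrite !plus_INR, !S_INR. lra.
    rewrite !plus_INR, !S_INR. lra.
  - unfold P, Z.
    apply Rle_trans with (((2/3) * (2 * INR N + 2 - Cst al a b))^4)%R.
    apply pow_incr. lra. rewrite Rpow_mult_distr.
    assert (0 <= (2 * INR N + 2 - Cst al a b)^4)%R by (apply pow_le; lra).
    simpl. nra.
Qed.

Lemma B1 al a b N k : good al a b -> (5 * Cst al a b + 2 <= INR N)%R ->
  (Cmod (Fm al a b (S N) k) <= / 2 * Cmod (Fm al a b N k))%R.
Proof. apply B1'. Qed.

Lemma B2 al a b N : good al a b -> (5 * Cst al a b + 2 <= INR N)%R ->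
  exists Bc, forall k, (Cmod (Fm al a b N k) <= Bc * bq k)%R.
Proof. apply B2'. Qed.


Lemma qn_dec (x a b : C) (n : nat) :
  qn x a b (S n) =
  (2 * (2 * RtoC (INR n) + 1) * (3 * RtoC (INR n) + 2 * x)) * Qf a b (x + (2 * RtoC (INR n) + 1))
  + Qf a b (x + RtoC (INR n)) *
    (2 * x * x + (10 * RtoC (INR n) + 6) * x
     + (13 * (RtoC (INR n) + 1) * (RtoC (INR n) + 1) - 10 * (RtoC (INR n) + 1) + 2 - a * a - b * b)).
Proof. unfold qn, Qf. rewrite INRC_S. ring. Qed.

Lemma real_B4 (cc qn L R q0 q2 rest t E1 E2 : R) :
  (0 <= cc)%R -> (0 <= t)%R -> (0 <= qn)%R -> (0 <= L)%R -> (0 <= R)%R ->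
  (L <= (t+1) * E1)%R -> (R <= (t+1)*(t+1) * E2)%R ->
  (((t+1)/2)^4 <= q0)%R -> (((t+1)/2)^4 <= q2)%R -> (1 <= rest)%R ->
  (qn <= L * q2 + q0 * R)%R ->
  (cc * qn / (q0 * rest * q2) <= 16 * cc * (E1 + E2) / (t + 1))%R.
Proof.
  intros Hc Ht Hq HL HR HL1 HR1 H0 H2 Hr Hqn.
  set (D := (((t+1)/2)^4)%R) in *.
  assert (HD : (0 < D)%R) by (unfold D; apply pow_lt; lra).
  assert (HD' : (D = (t+1)^4 / 16)%R) by (unfold D; field).
  assert (E1p : (0 <= E1)%R) by nra.
  assert (E2p : (0 <= E2)%R) by nra.
  assert (h1 : (qn / (q0 * rest * q2) <= L / q0 + R / q2)%R).
  { apply Rle_trans with (qn / (q0 * q2))%R.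
    unfold Rdiv. apply Rmult_le_compat_l; auto. apply Rinv_le_contravar. nra.
    assert (0 <= q0 * q2)%R by nra. nra.
    apply Rle_trans with ((L * q2 + q0 * R) / (q0 * q2))%R.
    unfold Rdiv. apply Rmult_le_compat_r; auto. left. apply Rinv_0_lt_compat. nra.
    right. field. lra. }
  assert (h2 : (L / q0 <= 16 * E1 / (t+1))%R).
  { apply Rle_trans with ((t+1) * E1 / D)%R.
    unfold Rdiv. apply Rmult_le_compat; auto. left; apply Rinv_0_lt_compat; lra.
    apply Rinv_le_contravar; lra.
    rewrite HD'. apply (Rmult_le_reg_r ((t+1)^4)). apply pow_lt; lra.
    replace ((t + 1) * E1 / ((t + 1) ^ 4 / 16) * (t + 1) ^ 4)%R with (16 * (t+1) * E1)%R
      by (field; lra).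
    replace (16 * E1 / (t + 1) * (t + 1) ^ 4)%R with (16 * (t+1)^3 * E1)%R by (field; lra).
    assert ((t+1) <= (t+1)^3)%R by (simpl; nra). nra. }
  assert (h3 : (R / q2 <= 16 * E2 / (t+1))%R).
  { apply Rle_trans with ((t+1) * (t+1) * E2 / D)%R.
    unfold Rdiv. apply Rmult_le_compat; auto. left; apply Rinv_0_lt_compat; lra.
    apply Rinv_le_contravar; lra.
    rewrite HD'. apply (Rmult_le_reg_r ((t+1)^4)). apply pow_lt; lra.
    replace ((t + 1) * (t+1) * E2 / ((t + 1) ^ 4 / 16) * (t + 1) ^ 4)%R with (16 * ((t+1) * (t+1)) * E2)%R
      by (field; lra).
    replace (16 * E2 / (t + 1) * (t + 1) ^ 4)%R with (16 * (t+1)^3 * E2)%R by (field; lra).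
    assert ((t+1) * (t+1) <= (t+1)^3)%R by (simpl; nra). nra. }
  unfold Rdiv in *. rewrite Rmult_assoc.
  replace (16 * cc * (E1 + E2) * / (t + 1))%R with (cc * (16 * E1 * / (t + 1) + 16 * E2 * / (t + 1)))%R
    by ring.
  apply Rmult_le_compat_l; auto. lra.
Qed.


Lemma B4' al a b n : good al a b -> forall eps, (0 < eps)%R ->
  exists K0, forall K, (K0 <= K)%nat -> (Cmod (Gm al a b n K) < eps)%R.
Proof.
  intros Hg eps He. destruct (us_bound al a b) as (u1 & u2 & u3 & u4 & u5 & u6).
  set (v := RtoC (INR n)).
  set (c0 := 13 * (v + 1) * (v + 1) - 10 * (v + 1) + 2 - a * a - b * b).
  set (cc := Cmod (s a b n / (4 * (2 * v + 1)))).
  set (E1 := (2 * (2 * INR n + 1) * (3 * INR n + 2 * Cmod al + 2))%R).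
  set (E2 := (2 * (1 + Cmod al) * (1 + Cmod al) + (10 * INR n + 6) * (1 + Cmod al) + Cmod c0)%R).
  set (B := (16 * cc * (E1 + E2))%R).
  pose proof (pos_INR n) as Hn. pose proof (Cmod_ge_0 al) as Hal.
  pose proof (Cmod_ge_0 c0) as Hc0.
  assert (Hcc : (0 <= cc)%R) by apply Cmod_ge_0.
  assert (HE1 : (0 <= E1)%R) by (unfold E1; nra).
  assert (HE2 : (0 <= E2)%R) by (unfold E2; nra).
  destruct (INR_archimed 1 (2 * Cst al a b + 2) ltac:(lra)) as [K1 HK1].
  destruct (INR_archimed eps B He) as [K2 HK2].
  exists (K1 + K2)%nat. intros K HK.
  assert (HKt : (INR K1 + INR K2 <= INR K)%R) by (rewrite <- plus_INR; apply le_INR; exact HK).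
  pose proof (pos_INR K1). pose proof (pos_INR K2).
  set (t := INR K) in *.
  assert (Hlt : (B / (t + 1) < eps)%R).
  { apply (Rmult_lt_reg_r (t+1)). lra. unfold Rdiv. rewrite Rmult_assoc, Rinv_l by lra.
    rewrite Rmult_1_r. nra. }
  eapply Rle_lt_trans; [| exact Hlt]. clear Hlt.
  set (Q0 := Qf a b (al + RtoC (INR (K + n)))).
  set (Q2 := Qf a b (al + RtoC (INR (K + n + S n)))).
  set (Rest := Wn a b (al + RtoC (INR (S (K + n)))) n).
  assert (HW : Wn a b (al + RtoC (INR (K + n))) (S (S n)) = Q0 * Rest * Q2).
  { change (Wn a b (al + RtoC (INR (K+n))) (S (S n))) with
      (Wn a b (al + RtoC (INR (K+n))) (S n) * Qf a b (al + RtoC (INR (K+n)) + RtoC (INR (S n)))).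
    rewrite Wn_Sl.
    unfold Q0, Rest, Q2. f_equal; [f_equal; f_equal; rewrite INRC_S; ring | f_equal; rewrite !INRC_plus; ring]. }
  set (x := al + RtoC t).
  set (lin := 2 * (2 * v + 1) * (3 * v + 2 * x)).
  set (R2 := 2 * x * x + (10 * v + 6) * x + c0).
  assert (Hq : qn x a b (S n) = lin * Q2 + Q0 * R2).
  { rewrite qn_dec. unfold lin, R2, c0, Q0, Q2, x, t, v. f_equal. f_equal. f_equal.
    rewrite !INRC_plus, INRC_S. ring. f_equal. f_equal. rewrite INRC_plus. ring. }
  unfold Gm. fold v. fold t. fold x. rewrite HW, Hq.
  assert (HQ0 : Q0 <> 0) by apply Hg.
  assert (HQ2 : Q2 <> 0) by apply Hg.
  assert (HR : Rest <> 0) by apply Wn_nz, Hg.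
  assert (Hd : Q0 * Rest * Q2 <> 0) by (apply Cmult_neq_0; [apply Cmult_neq_0|]; assumption).
  rewrite Cmod_div by exact Hd. rewrite Cmod_mult. fold cc. rewrite !Cmod_mult.
  unfold B.
  apply real_B4 with (L := Cmod lin) (R := Cmod R2).
  - exact Hcc.
  - unfold t; apply pos_INR.
  - apply Cmod_ge_0.
  - apply Cmod_ge_0.
  - apply Cmod_ge_0.
  -
    unfold lin. rewrite !Cmod_mult.
    assert (e1 : 2 * (2 * v + 1) = RtoC (2 * (2 * INR n + 1))) by (unfold v; repeat rewrite ?RtoC_plus, ?RtoC_mult; reflexivity).
    assert (e2 : 3 * v + 2 * x = 2 * al + RtoC (3 * INR n + 2 * t)) by (unfold x, v; repeat rewrite ?RtoC_plus, ?RtoC_mult; ring).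
    rewrite <- Cmod_mult, e1, e2, Cmod_R, Rabs_pos_eq by lra.
    assert (h : (Cmod (2 * al) <= 2 * Cmod al)%R) by (rewrite Cmod_mult, Cmod_R, Rabs_pos_eq by lra; lra).
    pose proof (Cmod_ub (2 * al) (2 * Cmod al) (3 * INR n + 2 * t) h ltac:(unfold t; pose proof (pos_INR K); lra)).
    unfold E1. assert (0 <= t)%R by (unfold t; apply pos_INR).
    assert (3 * INR n + 2 * t + 2 * Cmod al <= (t + 1) * (3 * INR n + 2 * Cmod al + 2))%R by nra.
    assert (0 <= 2 * (2 * INR n + 1))%R by lra.
    apply Rle_trans with (2 * (2 * INR n + 1) * (3 * INR n + 2 * t + 2 * Cmod al))%R.
    apply Rmult_le_compat_l; lra. nra.
  -
    assert (hx : (Cmod x <= t + Cmod al)%R).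
    { unfold x. rewrite Cplus_comm. eapply Rle_trans. apply Cmod_triangle. rewrite Cmod_R, Rabs_pos_eq. lra. unfold t; apply pos_INR. }
    assert (0 <= t)%R by (unfold t; apply pos_INR).
    assert (hv : Cmod (10 * v + 6) = (10 * INR n + 6)%R).
    { replace (10 * v + 6) with (RtoC (10 * INR n + 6)) by (unfold v; repeat rewrite ?RtoC_plus, ?RtoC_mult; reflexivity).
      rewrite Cmod_R, Rabs_pos_eq; lra. }
    assert (hR : (Cmod R2 <= 2 * Cmod x * Cmod x + (10 * INR n + 6) * Cmod x + Cmod c0)%R).
    { unfold R2. eapply Rle_trans. apply Cmod_triangle. eapply Rle_trans. apply Rplus_le_compat_r. apply Cmod_triangle.
      rewrite !Cmod_mult, hv, Cmod_R, Rabs_pos_eq by lra. lra. }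
    pose proof (Cmod_ge_0 x).
    assert (hx2 : (Cmod x <= (t + 1) * (1 + Cmod al))%R) by nra.
    unfold E2. eapply Rle_trans. exact hR.
    assert (Cmod x * Cmod x <= ((t+1) * (1 + Cmod al)) * ((t+1) * (1 + Cmod al)))%R
      by (apply Rmult_le_compat; lra).
    assert (1 <= t + 1)%R by lra.
    assert ((10 * INR n + 6) * Cmod x <= (10 * INR n + 6) * ((t + 1) * (1 + Cmod al)))%R
      by (apply Rmult_le_compat_l; lra).
    assert (0 <= (10 * INR n + 6) * ((t + 1) * (1 + Cmod al)))%R by (apply Rmult_le_pos; nra).
    assert ((10 * INR n + 6) * ((t + 1) * (1 + Cmod al)) <= (t+1) * (t+1) * ((10 * INR n + 6) * (1 + Cmod al)))%R.
    { replace ((t+1) * (t+1) * ((10 * INR n + 6) * (1 + Cmod al)))%R with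
        ((t+1) * ((10 * INR n + 6) * ((t + 1) * (1 + Cmod al))))%R by ring. nra. }
    assert (Cmod c0 <= (t+1) * (t+1) * Cmod c0)%R by nra.
    nra.
  - eapply Rle_trans; [| apply Qf_lb]. apply pow_incr. rewrite plus_INR. pose proof (pos_INR n). unfold t in *. lra.
    rewrite plus_INR. unfold t in *. lra.
  - eapply Rle_trans; [| apply Qf_lb]. apply pow_incr. rewrite !plus_INR. pose proof (pos_INR n). pose proof (pos_INR (S n)). unfold t in *. lra.
    rewrite !plus_INR. pose proof (pos_INR (S n)). unfold t in *. lra.
  - apply Rest_ge1. rewrite S_INR, plus_INR. unfold t in *. lra.
  - eapply Rle_trans. apply Cmod_triangle. rewrite !Cmod_mult. lra.
Qed.

Lemma B4 al a b n : good al a b -> forall eps, (0 < eps)%R ->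
  exists K0, forall K, (K0 <= K)%nat -> (Cmod (Gm al a b n K) < eps)%R.
Proof. apply B4'. Qed.

Lemma Gsum_small al a b : good al a b -> forall N eps, (0 < eps)%R ->
  exists K0, forall K, (K0 <= K)%nat -> (Cmod (ps (fun n => Gm al a b n K) N) < eps)%R.
Proof.
  intros Hg N. induction N; intros eps He.
  - exists 0%nat. intros K _. simpl. rewrite Cmod_0. exact He.
  - destruct (IHN (eps/2)%R ltac:(lra)) as [K1 h1].
    destruct (B4 al a b N Hg (eps/2)%R ltac:(lra)) as [K2 h2].
    exists (K1+K2)%nat. intros K HK. simpl.
    eapply Rle_lt_trans. apply Cmod_triangle.
    specialize (h1 K ltac:(lia)). specialize (h2 K ltac:(lia)). lra.
Qed.

Lemma Lconv al a b : good al a b -> forall N T, is_series (Fm al a b N) T ->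
  is_series (Fm al a b 0) (T + ps (fun n => Gm al a b n 0) N).
Proof.
  intros Hg N T HT. apply limC. intros eps He.
  destruct (limC_inv _ _ HT (eps/2)%R ltac:(lra)) as [K1 h1].
  destruct (Gsum_small al a b Hg N (eps/2)%R ltac:(lra)) as [K2 h2].
  exists (K1 + K2)%nat. intros n Hn.
  specialize (h1 n ltac:(lia)). specialize (h2 (S n) ltac:(lia)).
  assert (e1 : (sum_n (Fm al a b 0) n : C) = ps (Fm al a b N) (S n) + ps (fun n => Gm al a b n 0) N
     - ps (fun n0 => Gm al a b n0 (S n)) N).
  { rewrite sum_ps. apply main_id, Hg. }
  assert (e2 : (sum_n (Fm al a b N) n : C) = ps (Fm al a b N) (S n)) by apply sum_ps.
  assert (h1' : (Cmod (ps (Fm al a b N) (S n) - T) < eps/2)%R).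
  { rewrite <- e2. exact h1. }
  change (Cmod ((sum_n (Fm al a b 0) n : C) - (T + ps (fun n => Gm al a b n 0) N)) < eps)%R.
  rewrite e1.
  replace (ps (Fm al a b N) (S n) + ps (fun n0 : nat => Gm al a b n0 0) N -
     ps (fun n0 : nat => Gm al a b n0 (S n)) N - (T + ps (fun n0 : nat => Gm al a b n0 0) N))
   with ((ps (Fm al a b N) (S n) - T) + - ps (fun n0 : nat => Gm al a b n0 (S n)) N) by ring.
  eapply Rle_lt_trans. apply Cmod_triangle. rewrite Cmod_opp. lra.
Qed.

Lemma sum_bound (f : nat -> C) (c : R) : (forall k, Cmod (f k) <= c * bq k)%R ->
  forall K, (Cmod (sum_n f K) <= c * sum_n bq K)%R.
Proof.
  intros H K. induction K.
  - rewrite !sum_O. apply H.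
  - rewrite !sum_Sn. change (Cmod (sum_n f K + f (S K)) <= c * (sum_n bq K + bq (S K)))%R.
    eapply Rle_trans. apply Cmod_triangle. specialize (H (S K)). nra.
Qed.

Lemma bq_pos k : (0 < bq k)%R.
Proof. unfold bq. pose proof (pos_INR k). apply Rinv_0_lt_compat. nra. Qed.

Lemma series_bound (f : nat -> C) (c : R) T : (forall k, Cmod (f k) <= c * bq k)%R ->
  is_series f T -> (Cmod T <= c)%R.
Proof.
  intros H HT. assert (Hc : (0 <= c)%R).
  { specialize (H 0%nat). pose proof (Cmod_ge_0 (f 0%nat)). pose proof (bq_pos 0).
    destruct (Rle_or_lt 0 c); auto. nra. }
  apply le_epsilon. intros eps He.
  destruct (limC_inv _ _ HT eps He) as [K hK]. specialize (hK K (le_n K)).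
  pose proof (sum_bound f c H K). pose proof (bq_le K).
  set (z := (sum_n f K : C)) in *.
  assert (a1 : (Cmod (z - T) < eps)%R) by exact hK.
  assert (a2 : (Cmod z <= c * sum_n bq K)%R) by exact H0.
  replace T with (z + - (z - T)) by ring.
  eapply Rle_trans. apply Cmod_triangle. rewrite Cmod_opp. nra.
Qed.

Lemma B12 al a b N0 Bc : good al a b -> (5 * Cst al a b + 2 <= INR N0)%R ->
  (forall k, Cmod (Fm al a b N0 k) <= Bc * bq k)%R ->
  forall j k, (Cmod (Fm al a b (N0 + j) k) <= (/2)^j * Bc * bq k)%R.
Proof.
  intros Hg HN HB j. induction j; intros k.
  - rewrite Nat.add_0_r. simpl. rewrite Rmult_1_l. apply HB.
  - rewrite Nat.add_succ_r. eapply Rle_trans. apply B1. exact Hg.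
    rewrite plus_INR. pose proof (pos_INR j). lra.
    specialize (IHj k). simpl. nra.
Qed.

Lemma Tex al a b N0 Bc : good al a b -> (5 * Cst al a b + 2 <= INR N0)%R ->
  (forall k, Cmod (Fm al a b N0 k) <= Bc * bq k)%R ->
  forall j, exists T, is_series (Fm al a b (N0 + j)) T /\ (Cmod T <= (/2)^j * Bc)%R.
Proof.
  intros Hg HN HB j.
  pose proof (B12 al a b N0 Bc Hg HN HB j) as Hj.
  assert (Hex : ex_series (Fm al a b (N0 + j))).
  { apply (@ex_series_le C_AbsRing C_CompleteNormedModule _ (fun k => (/2)^j * Bc * bq k)%R).
    intros k. apply Hj.
    apply (ex_series_ext (fun k => (bq k * ((/2)^j * Bc))%R)). intros k. match goal with |- ?x = ?y => change (@eq R x y) end. ring.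
    apply ex_series_scal_r. exists 1%R. apply bq_series. }
  destruct Hex as [T HT]. exists T. split; auto.
  apply (series_bound _ _ T Hj HT).
Qed.

Lemma lin_nz (u : C) (m : nat) : ~ nonpos_int u -> u + RtoC (INR m) <> 0.
Proof.
  intros H E. apply H. exists m. rewrite RtoC_opp.
  replace u with (u + RtoC (INR m) - RtoC (INR m)) by ring. rewrite E. ring.
Qed.

Lemma good_of al a b :
  ~ nonpos_int (al + a) -> ~ nonpos_int (al - a) ->
  ~ nonpos_int (al + b) -> ~ nonpos_int (al - b) -> good al a b.
Proof.
  intros h1 h2 h3 h4 m. unfold Qf.
  replace ((al + RtoC (INR m)) * (al + RtoC (INR m)) - a * a) with
    ((al + a + RtoC (INR m)) * (al - a + RtoC (INR m))) by ring.
  replace ((al + RtoC (INR m)) * (al + RtoC (INR m)) - b * b) with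
    ((al + b + RtoC (INR m)) * (al - b + RtoC (INR m))) by ring.
  repeat apply Cmult_neq_0; apply lin_nz; auto.
Qed.

Theorem theorem4 (alpha a b : C) :
  ~ nonpos_int (alpha + a) -> ~ nonpos_int (alpha - a) ->
  ~ nonpos_int (alpha + b) -> ~ nonpos_int (alpha - b) ->
  exists L : C,
    is_series (lhs_term alpha a b) L /\
    is_series (fun n : nat => rhs_term alpha a b (S n) / 2) L.
Proof.
  intros h1 h2 h3 h4.
  pose proof (good_of alpha a b h1 h2 h3 h4) as Hg.
  destruct (INR_archimed 1 (5 * Cst alpha a b + 2) ltac:(lra)) as [N0 HN0].
  assert (HN : (5 * Cst alpha a b + 2 <= INR N0)%R) by lra.
  destruct (B2 alpha a b N0 Hg HN) as [Bc HB].
  assert (HBc : (0 <= Bc)%R).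
  { specialize (HB 0%nat). pose proof (Cmod_ge_0 (Fm alpha a b N0 0%nat)). pose proof (bq_pos 0).
    destruct (Rle_or_lt 0 Bc); auto. nra. }
  destruct (Tex alpha a b N0 Bc Hg HN HB 0) as [T0 [HT0 _]].
  rewrite Nat.add_0_r in HT0.
  set (L := T0 + ps (fun n => Gm alpha a b n 0) N0).
  pose proof (Lconv alpha a b Hg N0 T0 HT0) as HL. fold L in HL.
  exists L. split.
  - apply (is_series_ext (Fm alpha a b 0)). intros n. apply Fm0, Hg. exact HL.
  - apply (is_series_ext (fun n => Gm alpha a b n 0)). intros n. apply Gm0, Hg.
    apply limC. intros eps He.
    destruct (pow_lt_1_zero (/2) ltac:(rewrite Rabs_pos_eq; lra) (eps / (Bc + 1)))
      as [J HJ].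
    { apply Rdiv_lt_0_compat; lra. }
    exists (N0 + J)%nat. intros n Hn.
    destruct (Tex alpha a b N0 Bc Hg HN HB (S n - N0)) as [Tj [HTj HTjb]].
    replace (N0 + (S n - N0))%nat with (S n) in HTj by lia.
    pose proof (Lconv alpha a b Hg (S n) Tj HTj) as HL2.
    pose proof (series_unique _ _ _ HL HL2) as EL.
    assert (E : (sum_n (fun n0 => Gm alpha a b n0 0) n : C) = ps (fun n0 => Gm alpha a b n0 0) (S n))
      by apply sum_ps.
    change (Cmod ((sum_n (fun n0 => Gm alpha a b n0 0) n : C) - L) < eps)%R.
    rewrite E, EL.
    replace (ps (fun n0 : nat => Gm alpha a b n0 0) (S n) -
      (Tj + ps (fun n0 : nat => Gm alpha a b n0 0) (S n))) with (- Tj) by ring.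
    rewrite Cmod_opp.
    specialize (HJ (S n - N0)%nat ltac:(lia)).
    rewrite Rabs_pos_eq in HJ by (apply pow_le; lra).
    eapply Rle_lt_trans. exact HTjb.
    assert ((/ 2) ^ (S n - N0) * (Bc + 1) < eps)%R.
    { apply (Rmult_lt_compat_r (Bc + 1)) in HJ; [| lra].
      unfold Rdiv in HJ. rewrite Rmult_assoc, Rinv_l in HJ by lra. lra. }
    pose proof (pow_le (/2) (S n - N0) ltac:(lra)). nra.
Qed.
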